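(* Let $H=(V_H,E_H)$ be a directed graph, let $k,\ell\in V_H$ with $k\ne\ell$, and let $j$ be a positive integer. Assume $H$ has no edges outgoing from $\ell$, and let $K$ be the graph obtained from $H$ by removing all edges outgoing from $k$. Then $$\mathcal F_j^{k,\ell}(H)=\bigcup_{i:\,(k\to i)\in E_H}\left\{(V_H,\,E_F\cup\{k\to i\})\ :\ F\in\mathcal F_{j-1}^{i,\ell}(K)\right\}.$$
   Context: Graphs are finite directed (multi)graphs. A spanning incoming forest of a graph is a spanning subgraph (containing all vertices) whose underlying undirected graph has no cycles and in which each node has at most one outgoing edge. $\mathcal F_j^{a,b}(H)$ denotes the set of spanning incoming forests of $H$ with exactly $j$ edges such that some connected component (of the underlying undirected graph) contains both $a$ and $b$ (when $a=b$ this is all $j$-edge spanning incoming forests). $E_F$ denotes the edge set of $F$. *)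

(* Defs.v *)
From mathcomp Require Import all_boot.
Set Implicit Arguments. Unset Strict Implicit. Unset Printing Implicit Defensive.

(* A finite directed multigraph H is given by finite types of vertices V and
   edges E with source/target maps; the edge set of H is all of E.
   Spanning subgraphs (containing all vertices) are identified with their edge
   sets, i.e. subsets F : {set E}. *)

Section Forests.
Variables (V E : finType) (src tgt : E -> V).

Definition joins (e : E) (x y : V) : bool :=
  ((src e == x) && (tgt e == y)) || ((src e == y) && (tgt e == x)).

(* the underlying undirected graph of edge set F contains a cycle:
   distinct vertices v_0..v_{m-1} (m >= 1) and distinct edges e_0..e_{m-1}
   of F, with e_t joining v_t and v_{(t+1) mod m}.  (Loops give m = 1,
   parallel edges give m = 2.) *)
Definition has_undirected_cycle (F : {set E}) : Prop :=
  exists (es : seq E) (vs : seq V) (e0 : E) (v0 : V),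
    [/\ size es = size vs, 0 < size es, uniq es, uniq vs &
        {subset es <= F}] /\
        forall t, t < size es ->
          joins (nth e0 es t) (nth v0 vs t) (nth v0 vs ((t.+1) %% size vs)).

Definition outdeg_le1 (F : {set E}) : Prop :=
  forall x : V, #|[set e in F | src e == x]| <= 1.

Definition spanning_incoming_forest (D F : {set E}) : Prop :=
  [/\ F \subset D, ~ has_undirected_cycle F & outdeg_le1 F].

Definition same_component (F : {set E}) (a b : V) : bool :=
  connect [rel x y | [exists e in F, joins e x y]] a b.

Definition in_Fj (j : nat) (a b : V) (D F : {set E}) : Prop :=
  [/\ spanning_incoming_forest D F, #|F| = j & same_component F a b].

End Forests.

(* Main.v *)
Require Import Defs.
From mathcomp Require Import all_boot.
Set Implicit Arguments. Unset Strict Implicit.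

Definition Rl (V E : finType) (src tgt : E -> V) (F : {set E}) : rel V :=
  [rel x y | [exists e in F, joins src tgt e x y]].

Lemma Rl_sym (V E : finType) (src tgt : E -> V) (F : {set E}) : symmetric (Rl src tgt F).
Proof.
move=> x y; apply/existsP/existsP => -[f /andP[fF J]]; exists f; rewrite fF /=;
  by move: J; rewrite /joins orbC.
Qed.

Lemma Rl_sub (V E : finType) (src tgt : E -> V) (F G : {set E}) (x y : V) :
  F \subset G -> connect (Rl src tgt F) x y -> connect (Rl src tgt G) x y.
Proof.
move=> sFG; apply: connect_sub => a b /existsP[f /andP[fF J]].
apply: connect1; apply/existsP; exists f; by rewrite (subsetP sFG).
Qed.

Lemma outdegP (V E : finType) (src : E -> V) (F : {set E}) : outdeg_le1 src F ->
  forall f g, f \in F -> g \in F -> src f = src g -> f = g.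
Proof.
move=> H f g fF gF e.
move/card_le1_eqP: (H (src f)) => /(_ g f); apply; by rewrite inE ?fF ?gF e eqxx.
Qed.

Lemma outdegI (V E : finType) (src : E -> V) (F : {set E}) :
  (forall f g, f \in F -> g \in F -> src f = src g -> f = g) -> outdeg_le1 src F.
Proof.
move=> H x; apply/card_le1_eqP => f g; rewrite !inE => /andP[fF /eqP sf] /andP[gF /eqP sg].
by apply: H => //; rewrite sf sg.
Qed.

Lemma sinks_aux (V E : finType) (src tgt : E -> V) (F : {set E}) : outdeg_le1 src F ->
  forall p x, path (Rl src tgt F) x p -> uniq (x :: p) -> p != [::] ->
  (forall f, f \in F -> src f = x -> tgt f \notin p) ->
  exists2 f, f \in F & src f = last x p.
Proof.
move=> Hout; elim => [|y p IH] x //= /andP[/existsP[f /andP[fF J]] Pp] /andP[xn U] _ Hx.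
move: J; rewrite /joins => /orP[/andP[/eqP sf /eqP tf]|/andP[/eqP sf /eqP tf]].
  by move: (Hx f fF sf); rewrite tf inE eqxx.
case: p IH Pp U xn Hx => [|z p] IH Pp U xn _; first by exists f.
apply: IH => //.
move=> g gF sg; rewrite (outdegP Hout gF fF) ?sg ?sf // tf.
by move: xn; rewrite inE negb_or => /andP[].
Qed.

Lemma sinks (V E : finType) (src tgt : E -> V) (F : {set E}) (a b : V) : outdeg_le1 src F -> a != b ->
  (forall f, f \in F -> src f != a) -> (forall f, f \in F -> src f != b) ->
  ~~ same_component src tgt F a b.
Proof.
move=> Hout ab Ha Hb; apply/negP => /connectP[p Pp].
case: (shortenP Pp) => p' Pp' U _ Lb.
case: p' Pp' U Lb => [|y p'] Pp' U Lb; first by rewrite Lb eqxx in ab.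
have [] := sinks_aux Hout Pp' U isT.
  by move=> f fF sf; move: (Ha f fF); rewrite sf eqxx.
by move=> f fF sf; move: (Hb f fF); rewrite sf -Lb eqxx.
Qed.

Lemma cycle_conn (V E : finType) (src tgt : E -> V) (F : {set E}) e es vs e0 v0 :
  size es = size vs -> 0 < size es -> uniq es -> {subset es <= F :|: [set e]} ->
  (forall t, t < size es ->
     joins src tgt (nth e0 es t) (nth v0 vs t) (nth v0 vs (t.+1 %% size vs))) ->
  e \in es -> connect (Rl src tgt F) (src e) (tgt e).
Proof.
move=> Hs Hpos U Hsub J ein.
set m := size es.
set t0 := index e es.
have t0m : t0 < m by rewrite index_mem.
have ne0 : nth e0 es t0 = e by rewrite nth_index.
pose w c := nth v0 vs (c %% m).
have chain : forall a b, a <= b -> (forall c, a <= c < b -> c < m /\ c != t0) ->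
    connect (Rl src tgt F) (w a) (w b).
  move=> a; elim => [|b IH] Hab Hc.
    by move: Hab; rewrite leqn0 => /eqP ->.
  case: (eqVneq a b.+1) => [->|nab]; first exact: connect0.
  have ab : a <= b by rewrite -ltnS ltn_neqAle nab.
  apply: connect_trans (IH ab _) _.
    by move=> c /andP[h1 h2]; apply: Hc; rewrite h1 ltnW.
  have [bm bt] : b < m /\ b != t0 by apply: Hc; rewrite ab leqnn.
  apply: connect1; apply/existsP; exists (nth e0 es b); apply/andP; split.
    have := Hsub _ (mem_nth e0 bm); rewrite !inE => /orP[//|/eqP bad].
    move: bt; rewrite -(nth_uniq e0 bm t0m U) ne0 bad eqxx //.
  have := J b bm; rewrite /w (modn_small bm) /m Hs //.
have c1 : connect (Rl src tgt F) (w t0.+1) (w m).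
  apply: chain => // c /andP[h1 h2]; split => //; by rewrite neq_ltn h1 orbT.
have c2 : connect (Rl src tgt F) (w 0) (w t0).
  apply: chain => // c /andP[h1 h2]; split; [exact: ltn_trans h2 t0m| by rewrite neq_ltn h2].
have wm : w m = w 0 by rewrite /w modnn mod0n.
have c3 : connect (Rl src tgt F) (w t0.+1) (w t0) by apply: connect_trans c1 _; rewrite wm.
have := J t0 t0m; rewrite ne0.
have -> : nth v0 vs t0 = w t0 by rewrite /w modn_small.
have -> : nth v0 vs (t0.+1 %% size vs) = w t0.+1 by rewrite /w /m Hs.
rewrite /joins => /orP[/andP[/eqP -> /eqP ->]|/andP[/eqP -> /eqP ->]] //.
by rewrite (sym_connect_sym (Rl_sym src tgt F)).
Qed.

Lemma path_avoid (V E : finType) (src tgt : E -> V) (G : {set E}) (e : E) (p : seq V) (x : V) :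
  path (Rl src tgt G) x p -> src e \notin x :: p -> path (Rl src tgt (G :\ e)) x p.
Proof.
elim: p x => [|y p IH] x //= /andP[/existsP[f /andP[fG J]] P].
rewrite inE negb_or => /andP[xn ynp].
apply/andP; split; last by apply: IH.
apply/existsP; exists f; rewrite in_setD1 fG J !andbT.
apply/eqP => fe; subst f.
move: ynp; rewrite inE negb_or => /andP[yn _].
move: J; rewrite /joins => /orP[/andP[/eqP sx _]|/andP[/eqP sy _]].
  by rewrite sx eqxx in xn.
by rewrite sy eqxx in yn.
Qed.

Unset Implicit Arguments.

Theorem lemma2p6 (V E : finType) (src tgt : E -> V) (k l : V) (j : nat) :
  k != l -> 0 < j ->
  (forall e : E, src e != l) ->
  let EH : {set E} := setT in
  let EK : {set E} := [set e | src e != k] in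
  forall G : {set E},
    in_Fj src tgt j k l EH G <->
    exists e : E, src e = k /\
      exists F : {set E}, in_Fj src tgt j.-1 (tgt e) l EK F /\ G = F :|: [set e].
Proof.
move=> kl j0 Hl EH EK G; split.
- move=> [[_ Gac Gout] cG cc].
  have [/existsP[e /andP[eG /eqP se]]|nex] := boolP [exists e in G, src e == k]; last first.
    have H1 : forall f, f \in G -> src f != k.
      by move=> f fG; apply/negP => sf; apply: (negP nex); apply/existsP; exists f; rewrite fG.
    by have := @sinks _ _ src tgt _ _ _ Gout kl H1 (fun f _ => Hl f); rewrite cc.
  exists e; split => //; exists (G :\ e).
  have HF : forall f, f \in G :\ e -> src f != k.
    move=> f; rewrite in_setD1 => /andP[fe fG]; apply/eqP => sf.
    by move: fe; rewrite (outdegP Gout fG eG) ?sf ?se // eqxx.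
  have FG : G :\ e \subset G by apply: subD1set.
  have Fout : outdeg_le1 src (G :\ e).
    by apply: outdegI => f g fF gF; apply: (outdegP Gout); apply: (subsetP FG).
  split; last by rewrite setUC setD1K.
  split.
  + split.
    * by apply/subsetP => f fF; rewrite inE HF.
    * move=> [es [vs [e0 [v0 [[a b c d s] J]]]]]; apply: Gac.
      exists es, vs, e0, v0; split => //; split => // x /s; exact: (subsetP FG).
    * exact: Fout.
  + by move: cG; rewrite (cardsD1 e) eG add1n => <-.
  + move/connectP: cc => [p Pp].
    case: (shortenP Pp) => p' Pp' U _ Lp.
    case: p' Pp' U Lp => [|v1 p'] /= Pp' U Lp; first by rewrite Lp eqxx in kl.
    move/andP: Pp' => [/existsP[f /andP[fG J]] Pp'].
    have Pf : path (Rl src tgt (G :\ e)) v1 p'.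
      apply: path_avoid => //; rewrite se; by move/andP: U => [].
    have v1l : connect (Rl src tgt (G :\ e)) v1 l by apply/connectP; exists p'.
    case: (eqVneq f e) => [fe|fne].
      subst f; move: J; rewrite /joins => /orP[/andP[_ /eqP ->] //|/andP[/eqP sv _]].
      by move: U; rewrite -sv se inE eqxx.
    exfalso.
    have fF : f \in G :\ e by rewrite in_setD1 fne fG.
    have kl' : connect (Rl src tgt (G :\ e)) k l.
      apply: connect_trans v1l; apply: connect1; apply/existsP; exists f; by rewrite fF.
    by have := @sinks _ _ src tgt _ _ _ Fout kl HF (fun f _ => Hl f); rewrite /same_component kl'.
- move=> [e [se [F [[[FK Fac Fout] cF cc] ->]]]].
  have HF : forall f, f \in F -> src f != k.
    by move=> f fF; move/subsetP: FK => /(_ f fF); rewrite inE.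
  have eF : e \notin F by apply/negP => /HF; rewrite se eqxx.
  have Gout : outdeg_le1 src (F :|: [set e]).
    apply: outdegI => f g; rewrite !inE => /orP[fF|/eqP ->] /orP[gF|/eqP ->] sfg //.
    * exact: (outdegP Fout).
    * by move: (HF f fF); rewrite sfg se eqxx.
    * by move: (HF g gF); rewrite -sfg se eqxx.
  split.
  + split => //.
    * exact: subsetT.
    * move=> [es [vs [e0 [v0 [[a b c d s] J]]]]].
      case: (boolP (e \in es)) => ein.
        have := cycle_conn a b c s J ein; rewrite se => ki.
        have kl' := connect_trans ki cc.
        by have := @sinks _ _ src tgt _ _ _ Fout kl HF (fun f _ => Hl f); rewrite /same_component kl'.
      apply: Fac; exists es, vs, e0, v0; split => //; split => // x xs.
      have := s x xs; rewrite !inE => /orP[//|/eqP xe].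
      by move: ein; rewrite -xe xs.
  + by rewrite setUC cardsU1 eF cF add1n prednK.
  + apply: (connect_trans (y := tgt e)).
      apply: connect1; apply/existsP; exists e; rewrite !inE eqxx orbT /= /joins se !eqxx //.
    apply: Rl_sub cc; exact: subsetUl.
Qed.
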